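(* Let $v_1\ge v_2\ge v_3\ge v_4>0$ and $p_{ij}=\frac{v_i}{v_i+v_j}$. For $i\in\{1,2,3,4\}$ and $j\in\{A,B,C\}$ let $T_{ij}$ be the probability that team $a_i$ wins the knockout tournament of type $j$. Then $T_{1A}\ge T_{1B}\ge T_{1C}$, $T_{2B}\ge T_{2A}\ge T_{2C}$, $T_{3C}\ge T_{3A}\ge T_{3B}$, and $T_{4C}\ge T_{4B}\ge T_{4A}$.
   Context: Four teams $a_1,\dots,a_4$ with weights $v_1,\dots,v_4$. In any game between $a_i$ and $a_j$, $a_i$ wins with probability $p_{ij}=v_i/(v_i+v_j)$, independently of other games. A knockout tournament consists of two first-round games whose winners meet in a final. Tournament $A$: first round $a_1$ vs $a_4$ and $a_2$ vs $a_3$. Tournament $B$: first round $a_1$ vs $a_3$ and $a_2$ vs $a_4$. Tournament $C$: first round $a_1$ vs $a_2$ and $a_3$ vs $a_4$. *)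

(* Defs.v *)
From mathcomp Require Import all_boot all_order all_algebra.
Set Implicit Arguments. Unset Strict Implicit. Unset Printing Implicit Defensive.
Import Order.TTheory GRing.Theory Num.Theory.
Local Open Scope ring_scope.

(* Teams a_1..a_4 are indexed by 'I_4 (a_1 = index 0, ..., a_4 = index 3). *)
Section Tourn.
Variable R : realFieldType.
Variable v : 'I_4 -> R.

Definition pwin (i j : 'I_4) : R := v i / (v i + v j).

(* Knockout tournament with first-round games  a vs b  and  c vs d;
   winners meet in the final, all games independent.
   ko a b c d x = probability that team x wins the tournament. *)
Definition ko (a b c d x : 'I_4) : R :=
  if x == a then pwin a b * (pwin c d * pwin a c + pwin d c * pwin a d)
  else if x == b then pwin b a * (pwin c d * pwin b c + pwin d c * pwin b d)
  else if x == c then pwin c d * (pwin a b * pwin c a + pwin b a * pwin c b)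
  else if x == d then pwin d c * (pwin a b * pwin d a + pwin b a * pwin d b)
  else 0.

Definition t1 : 'I_4 := inord 0.
Definition t2 : 'I_4 := inord 1.
Definition t3 : 'I_4 := inord 2.
Definition t4 : 'I_4 := inord 3.

Definition TA (x : 'I_4) : R := ko t1 t4 t2 t3 x.
Definition TB (x : 'I_4) : R := ko t1 t3 t2 t4 x.
Definition TC (x : 'I_4) : R := ko t1 t2 t3 t4 x.
End Tourn.

(* Main.v *)
Require Import Defs.
From mathcomp Require Import all_boot all_order all_algebra.
From mathcomp Require Import ring lra.
Import Order.TTheory GRing.Theory Num.Theory.
Local Open Scope ring_scope.

Section Aux.
Variable R : realFieldType.
Implicit Types a b c d s t u : R.

Ltac pos := repeat (apply: addr_ge0 || apply: mulr_ge0 || apply: exprn_ge0 || apply: ler0n || apply: ler01 || assumption).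

Definition DEN a b c d := (a+b)*(a+c)*(a+d)*(b+c)*(b+d)*(c+d).
Lemma basics a b c d : 0 < d -> d <= c -> c <= b -> b <= a -> [/\ 0 < a, 0 < b & 0 < c].
Proof. move=> *; split; lra. Qed.
Lemma DEN_gt0 {a b c d} : 0 < a -> 0 < b -> 0 < c -> 0 < d -> 0 < DEN a b c d.
Proof. move=> *; rewrite /DEN; repeat apply: mulr_gt0; apply: addr_gt0 => //. Qed.
Ltac sidec := repeat match goal with |- is_true (_ && _) => apply/andP; split | |- _ /\ _ => split end;
  apply: lt0r_neq0; repeat (apply: mulr_gt0 || apply: addr_gt0 || assumption).

Definition N1 (d s t u : R) := (2%:R * s^+2 * t^+2 * u^+2) + (4%:R * s^+2 * t^+3 * u^+1) + (2%:R * s^+2 * t^+4) + (4%:R * s^+3 * t^+1 * u^+2) + (12%:R * s^+3 * t^+2 * u^+1) + (8%:R * s^+3 * t^+3) + (2%:R * s^+4 * u^+2) + (12%:R * s^+4 * t^+1 * u^+1) + (12%:R * s^+4 * t^+2) + (4%:R * s^+5 * u^+1) + (8%:R * s^+5 * t^+1) + (2%:R * s^+6) + (4%:R * d^+1 * s^+1 * t^+2 * u^+2) + (8%:R * d^+1 * s^+1 * t^+3 * u^+1) + (4%:R * d^+1 * s^+1 * t^+4) + (12%:R * d^+1 * s^+2 * t^+1 * u^+2) + (36%:R * d^+1 * s^+2 * t^+2 * u^+1) + (24%:R * d^+1 * s^+2 * t^+3) + (8%:R * d^+1 * s^+3 * u^+2) + (48%:R * d^+1 * s^+3 * t^+1 *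 u^+1) + (48%:R * d^+1 * s^+3 * t^+2) + (20%:R * d^+1 * s^+4 * u^+1) + (40%:R * d^+1 * s^+4 * t^+1) + (12%:R * d^+1 * s^+5) + (8%:R * d^+2 * s^+1 * t^+1 * u^+2) + (24%:R * d^+2 * s^+1 * t^+2 * u^+1) + (16%:R * d^+2 * s^+1 * t^+3) + (10%:R * d^+2 * s^+2 * u^+2) + (60%:R * d^+2 * s^+2 * t^+1 * u^+1) + (60%:R * d^+2 * s^+2 * t^+2) + (36%:R * d^+2 * s^+3 * u^+1) + (72%:R * d^+2 * s^+3 * t^+1) + (28%:R * d^+2 * s^+4) + (4%:R * d^+3 * s^+1 * u^+2) + (24%:R * d^+3 * s^+1 * t^+1 * u^+1) + (24%:R * d^+3 * s^+1 * t^+2) + (28%:R * d^+3 * s^+2 * u^+1) + (56%:R * d^+3 * s^+2 * t^+1) + (32%:R * d^+3 * s^+3) + (8%:R * d^+4 * s^+1 * u^+1) + (16%:R * d^+4 * s^+1 * t^+1) + (18%:R * d^+4 * s^+2) + (4%:R * d^+5 * s^+1).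
Lemma N1_ge0 d s t u : 0 <= d -> 0 <= s -> 0 <= t -> 0 <= u -> 0 <= N1 d s t u.
Proof. move=> *; rewrite /N1; pos. Qed.
Lemma H1 a b c d : 0 < d -> d <= c -> c <= b -> b <= a ->
  (a / (a + c)) * ((b / (b + d)) * (a / (a + b)) + (d / (d + b)) * (a / (a + d))) <= (a / (a + d)) * ((b / (b + c)) * (a / (a + b)) + (c / (c + b)) * (a / (a + c))).
Proof.
move=> hd hdc hcb hba; rewrite -subr_ge0.
have [ha hb hc] : [/\ 0 < a, 0 < b & 0 < c] by split; lra.
have hD := DEN_gt0 ha hb hc hd.
have -> : (a / (a + d)) * ((b / (b + c)) * (a / (a + b)) + (c / (c + b)) * (a / (a + c))) - ((a / (a + c)) * ((b / (b + d)) * (a / (a + b)) + (d / (d + b)) * (a / (a + d)))) = N1 d (c - d) (b - c) (a - b) / DEN a b c d.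
  by rewrite /N1 /DEN; field; sidec.
apply: divr_ge0; last exact: ltW.
by apply: N1_ge0; rewrite ?subr_ge0 //; exact: ltW.
Qed.

Definition N2 (d s t u : R) := (2%:R * d^+2 * t^+2 * u^+2) + (4%:R * d^+2 * t^+3 * u^+1) + (2%:R * d^+2 * t^+4) + (4%:R * d^+2 * s^+1 * t^+1 * u^+2) + (12%:R * d^+2 * s^+1 * t^+2 * u^+1) + (8%:R * d^+2 * s^+1 * t^+3) + (8%:R * d^+2 * s^+2 * t^+1 * u^+1) + (10%:R * d^+2 * s^+2 * t^+2) + (4%:R * d^+2 * s^+3 * t^+1) + (4%:R * d^+3 * t^+1 * u^+2) + (12%:R * d^+3 * t^+2 * u^+1) + (8%:R * d^+3 * t^+3) + (16%:R * d^+3 * s^+1 * t^+1 * u^+1) + (20%:R * d^+3 * s^+1 * t^+2) + (12%:R * d^+3 * s^+2 * t^+1) + (8%:R * d^+4 * t^+1 * u^+1) + (10%:R * d^+4 * t^+2) + (12%:R * d^+4 * s^+1 * t^+1) + (4%:R * d^+5 * t^+1).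
Lemma N2_ge0 d s t u : 0 <= d -> 0 <= s -> 0 <= t -> 0 <= u -> 0 <= N2 d s t u.
Proof. move=> *; rewrite /N2; pos. Qed.
Lemma H2 a b c d : 0 < d -> d <= c -> c <= b -> b <= a ->
  (a / (a + b)) * ((c / (c + d)) * (a / (a + c)) + (d / (d + c)) * (a / (a + d))) <= (a / (a + c)) * ((b / (b + d)) * (a / (a + b)) + (d / (d + b)) * (a / (a + d))).
Proof.
move=> hd hdc hcb hba; rewrite -subr_ge0.
have [ha hb hc] : [/\ 0 < a, 0 < b & 0 < c] by split; lra.
have hD := DEN_gt0 ha hb hc hd.
have -> : (a / (a + c)) * ((b / (b + d)) * (a / (a + b)) + (d / (d + b)) * (a / (a + d))) - ((a / (a + b)) * ((c / (c + d)) * (a / (a + c)) + (d / (d + c)) * (a / (a + d)))) = N2 d (c - d) (b - c) (a - b) / DEN a b c d.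
  by rewrite /N2 /DEN; field; sidec.
apply: divr_ge0; last exact: ltW.
by apply: N2_ge0; rewrite ?subr_ge0 //; exact: ltW.
Qed.

Definition N3 (d s t u : R) := (2%:R * s^+2 * t^+2 * u^+2) + (4%:R * s^+2 * t^+3 * u^+1) + (2%:R * s^+2 * t^+4) + (4%:R * s^+3 * t^+1 * u^+2) + (12%:R * s^+3 * t^+2 * u^+1) + (8%:R * s^+3 * t^+3) + (2%:R * s^+4 * u^+2) + (12%:R * s^+4 * t^+1 * u^+1) + (12%:R * s^+4 * t^+2) + (4%:R * s^+5 * u^+1) + (8%:R * s^+5 * t^+1) + (2%:R * s^+6) + (4%:R * d^+1 * s^+1 * t^+2 * u^+2) + (8%:R * d^+1 * s^+1 * t^+3 * u^+1) + (4%:R * d^+1 * s^+1 * t^+4) + (12%:R * d^+1 * s^+2 * t^+1 * u^+2) + (36%:R * d^+1 * s^+2 * t^+2 * u^+1) + (24%:R * d^+1 * s^+2 * t^+3) + (8%:R * d^+1 * s^+3 * u^+2) + (48%:R * d^+1 * s^+3 * t^+1 * u^+1) + (48%:R * d^+1 * s^+3 * t^+2) + (20%:R * d^+1 * s^+4 * u^+1) + (40%:R * d^+1 * s^+4 * t^+1) + (12%:R * d^+1 * s^+5) + (8%:R * d^+2 * s^+1 * t^+1 * u^+2) + (24%:R * d^+2 * s^+1 * t^+2 * u^+1) + (16%:R * d^+2 * s^+1 * t^+3) + (10%:R * d^+2 * s^+2 * u^+2) + (60%:R * d^+2 * s^+2 * t^+1 * u^+1) + (60%:R * d^+2 * s^+2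 * t^+2) + (36%:R * d^+2 * s^+3 * u^+1) + (72%:R * d^+2 * s^+3 * t^+1) + (28%:R * d^+2 * s^+4) + (4%:R * d^+3 * s^+1 * u^+2) + (24%:R * d^+3 * s^+1 * t^+1 * u^+1) + (24%:R * d^+3 * s^+1 * t^+2) + (28%:R * d^+3 * s^+2 * u^+1) + (56%:R * d^+3 * s^+2 * t^+1) + (32%:R * d^+3 * s^+3) + (8%:R * d^+4 * s^+1 * u^+1) + (16%:R * d^+4 * s^+1 * t^+1) + (18%:R * d^+4 * s^+2) + (4%:R * d^+5 * s^+1).
Lemma N3_ge0 d s t u : 0 <= d -> 0 <= s -> 0 <= t -> 0 <= u -> 0 <= N3 d s t u.
Proof. move=> *; rewrite /N3; pos. Qed.
Lemma H3 a b c d : 0 < d -> d <= c -> c <= b -> b <= a ->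
  (b / (b + c)) * ((a / (a + d)) * (b / (b + a)) + (d / (d + a)) * (b / (b + d))) <= (b / (b + d)) * ((a / (a + c)) * (b / (b + a)) + (c / (c + a)) * (b / (b + c))).
Proof.
move=> hd hdc hcb hba; rewrite -subr_ge0.
have [ha hb hc] : [/\ 0 < a, 0 < b & 0 < c] by split; lra.
have hD := DEN_gt0 ha hb hc hd.
have -> : (b / (b + d)) * ((a / (a + c)) * (b / (b + a)) + (c / (c + a)) * (b / (b + c))) - ((b / (b + c)) * ((a / (a + d)) * (b / (b + a)) + (d / (d + a)) * (b / (b + d)))) = N3 d (c - d) (b - c) (a - b) / DEN a b c d.
  by rewrite /N3 /DEN; field; sidec.
apply: divr_ge0; last exact: ltW.
by apply: N3_ge0; rewrite ?subr_ge0 //; exact: ltW.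
Qed.

Definition N4 (d s t u : R) := (2%:R * d^+2 * t^+2 * u^+2) + (4%:R * d^+2 * t^+3 * u^+1) + (2%:R * d^+2 * t^+4) + (4%:R * d^+2 * s^+1 * t^+1 * u^+2) + (12%:R * d^+2 * s^+1 * t^+2 * u^+1) + (8%:R * d^+2 * s^+1 * t^+3) + (2%:R * d^+2 * s^+2 * u^+2) + (12%:R * d^+2 * s^+2 * t^+1 * u^+1) + (10%:R * d^+2 * s^+2 * t^+2) + (4%:R * d^+2 * s^+3 * u^+1) + (4%:R * d^+2 * s^+3 * t^+1) + (4%:R * d^+3 * t^+1 * u^+2) + (12%:R * d^+3 * t^+2 * u^+1) + (8%:R * d^+3 * t^+3) + (4%:R * d^+3 * s^+1 * u^+2) + (24%:R * d^+3 * s^+1 * t^+1 * u^+1) + (20%:R * d^+3 * s^+1 * t^+2) + (12%:R * d^+3 * s^+2 * u^+1) + (12%:R * d^+3 * s^+2 * t^+1) + (2%:R * d^+4 * u^+2) + (12%:R * d^+4 * t^+1 * u^+1) + (10%:R * d^+4 * t^+2) + (12%:R * d^+4 * s^+1 * u^+1) + (12%:R * d^+4 * s^+1 * t^+1) + (4%:R * d^+5 * u^+1) + (4%:R * d^+5 * t^+1).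
Lemma N4_ge0 d s t u : 0 <= d -> 0 <= s -> 0 <= t -> 0 <= u -> 0 <= N4 d s t u.
Proof. move=> *; rewrite /N4; pos. Qed.
Lemma H4 a b c d : 0 < d -> d <= c -> c <= b -> b <= a ->
  (b / (b + a)) * ((c / (c + d)) * (b / (b + c)) + (d / (d + c)) * (b / (b + d))) <= (b / (b + c)) * ((a / (a + d)) * (b / (b + a)) + (d / (d + a)) * (b / (b + d))).
Proof.
move=> hd hdc hcb hba; rewrite -subr_ge0.
have [ha hb hc] : [/\ 0 < a, 0 < b & 0 < c] by split; lra.
have hD := DEN_gt0 ha hb hc hd.
have -> : (b / (b + c)) * ((a / (a + d)) * (b / (b + a)) + (d / (d + a)) * (b / (b + d))) - ((b / (b + a)) * ((c / (c + d)) * (b / (b + c)) + (d / (d + c)) * (b / (b + d)))) = N4 d (c - d) (b - c) (a - b) / DEN a b c d.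
  by rewrite /N4 /DEN; field; sidec.
apply: divr_ge0; last exact: ltW.
by apply: N4_ge0; rewrite ?subr_ge0 //; exact: ltW.
Qed.

Definition N5 (d s t u : R) := (2%:R * s^+2 * t^+2 * u^+2) + (4%:R * s^+2 * t^+3 * u^+1) + (2%:R * s^+2 * t^+4) + (4%:R * s^+3 * t^+1 * u^+2) + (12%:R * s^+3 * t^+2 * u^+1) + (8%:R * s^+3 * t^+3) + (2%:R * s^+4 * u^+2) + (12%:R * s^+4 * t^+1 * u^+1) + (12%:R * s^+4 * t^+2) + (4%:R * s^+5 * u^+1) + (8%:R * s^+5 * t^+1) + (2%:R * s^+6) + (4%:R * d^+1 * s^+1 * t^+2 * u^+2) + (8%:R * d^+1 * s^+1 * t^+3 * u^+1) + (4%:R * d^+1 * s^+1 * t^+4) + (12%:R * d^+1 * s^+2 * t^+1 * u^+2) + (36%:R * d^+1 * s^+2 * t^+2 * u^+1) + (24%:R * d^+1 * s^+2 * t^+3) + (8%:R * d^+1 * s^+3 * u^+2) + (48%:R * d^+1 * s^+3 * t^+1 * u^+1) + (48%:R * d^+1 * s^+3 * t^+2) + (20%:R * d^+1 * s^+4 * u^+1) + (40%:R * d^+1 * s^+4 * t^+1) + (12%:R * d^+1 * s^+5) + (2%:R * d^+2 * t^+2 * u^+2) + (4%:R * d^+2 * t^+3 * u^+1) + (2%:R * d^+2 * t^+4) + (12%:R * d^+2 * s^+1 * t^+1 * u^+2) + (36%:R * d^+2 * s^+1 * t^+2 * u^+1) + (24%:R * d^+2 * s^+1 * t^+3) + (10%:R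 * d^+2 * s^+2 * u^+2) + (68%:R * d^+2 * s^+2 * t^+1 * u^+1) + (70%:R * d^+2 * s^+2 * t^+2) + (36%:R * d^+2 * s^+3 * u^+1) + (76%:R * d^+2 * s^+3 * t^+1) + (28%:R * d^+2 * s^+4) + (4%:R * d^+3 * t^+1 * u^+2) + (12%:R * d^+3 * t^+2 * u^+1) + (8%:R * d^+3 * t^+3) + (4%:R * d^+3 * s^+1 * u^+2) + (40%:R * d^+3 * s^+1 * t^+1 * u^+1) + (44%:R * d^+3 * s^+1 * t^+2) + (28%:R * d^+3 * s^+2 * u^+1) + (68%:R * d^+3 * s^+2 * t^+1) + (32%:R * d^+3 * s^+3) + (8%:R * d^+4 * t^+1 * u^+1) + (10%:R * d^+4 * t^+2) + (8%:R * d^+4 * s^+1 * u^+1) + (28%:R * d^+4 * s^+1 * t^+1) + (18%:R * d^+4 * s^+2) + (4%:R * d^+5 * t^+1) + (4%:R * d^+5 * s^+1).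
Lemma N5_ge0 d s t u : 0 <= d -> 0 <= s -> 0 <= t -> 0 <= u -> 0 <= N5 d s t u.
Proof. move=> *; rewrite /N5; pos. Qed.
Lemma H5 a b c d : 0 < d -> d <= c -> c <= b -> b <= a ->
  (c / (c + b)) * ((a / (a + d)) * (c / (c + a)) + (d / (d + a)) * (c / (c + d))) <= (c / (c + d)) * ((a / (a + b)) * (c / (c + a)) + (b / (b + a)) * (c / (c + b))).
Proof.
move=> hd hdc hcb hba; rewrite -subr_ge0.
have [ha hb hc] : [/\ 0 < a, 0 < b & 0 < c] by split; lra.
have hD := DEN_gt0 ha hb hc hd.
have -> : (c / (c + d)) * ((a / (a + b)) * (c / (c + a)) + (b / (b + a)) * (c / (c + b))) - ((c / (c + b)) * ((a / (a + d)) * (c / (c + a)) + (d / (d + a)) * (c / (c + d)))) = N5 d (c - d) (b - c) (a - b) / DEN a b c d.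
  by rewrite /N5 /DEN; field; sidec.
apply: divr_ge0; last exact: ltW.
by apply: N5_ge0; rewrite ?subr_ge0 //; exact: ltW.
Qed.

Definition N6 (d s t u : R) := (2%:R * d^+2 * s^+2 * u^+2) + (4%:R * d^+2 * s^+2 * t^+1 * u^+1) + (4%:R * d^+2 * s^+3 * u^+1) + (4%:R * d^+3 * s^+1 * u^+2) + (8%:R * d^+3 * s^+1 * t^+1 * u^+1) + (12%:R * d^+3 * s^+2 * u^+1) + (2%:R * d^+4 * u^+2) + (4%:R * d^+4 * t^+1 * u^+1) + (12%:R * d^+4 * s^+1 * u^+1) + (4%:R * d^+5 * u^+1).
Lemma N6_ge0 d s t u : 0 <= d -> 0 <= s -> 0 <= t -> 0 <= u -> 0 <= N6 d s t u.
Proof. move=> *; rewrite /N6; pos. Qed.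
Lemma H6 a b c d : 0 < d -> d <= c -> c <= b -> b <= a ->
  (c / (c + a)) * ((b / (b + d)) * (c / (c + b)) + (d / (d + b)) * (c / (c + d))) <= (c / (c + b)) * ((a / (a + d)) * (c / (c + a)) + (d / (d + a)) * (c / (c + d))).
Proof.
move=> hd hdc hcb hba; rewrite -subr_ge0.
have [ha hb hc] : [/\ 0 < a, 0 < b & 0 < c] by split; lra.
have hD := DEN_gt0 ha hb hc hd.
have -> : (c / (c + b)) * ((a / (a + d)) * (c / (c + a)) + (d / (d + a)) * (c / (c + d))) - ((c / (c + a)) * ((b / (b + d)) * (c / (c + b)) + (d / (d + b)) * (c / (c + d)))) = N6 d (c - d) (b - c) (a - b) / DEN a b c d.
  by rewrite /N6 /DEN; field; sidec.
apply: divr_ge0; last exact: ltW.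
by apply: N6_ge0; rewrite ?subr_ge0 //; exact: ltW.
Qed.

Definition N7 (d s t u : R) := (2%:R * d^+2 * t^+2 * u^+2) + (4%:R * d^+2 * t^+3 * u^+1) + (2%:R * d^+2 * t^+4) + (4%:R * d^+2 * s^+1 * t^+1 * u^+2) + (12%:R * d^+2 * s^+1 * t^+2 * u^+1) + (8%:R * d^+2 * s^+1 * t^+3) + (8%:R * d^+2 * s^+2 * t^+1 * u^+1) + (10%:R * d^+2 * s^+2 * t^+2) + (4%:R * d^+2 * s^+3 * t^+1) + (4%:R * d^+3 * t^+1 * u^+2) + (12%:R * d^+3 * t^+2 * u^+1) + (8%:R * d^+3 * t^+3) + (16%:R * d^+3 * s^+1 * t^+1 * u^+1) + (20%:R * d^+3 * s^+1 * t^+2) + (12%:R * d^+3 * s^+2 * t^+1) + (8%:R * d^+4 * t^+1 * u^+1) + (10%:R * d^+4 * t^+2) + (12%:R * d^+4 * s^+1 * t^+1) + (4%:R * d^+5 * t^+1).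
Lemma N7_ge0 d s t u : 0 <= d -> 0 <= s -> 0 <= t -> 0 <= u -> 0 <= N7 d s t u.
Proof. move=> *; rewrite /N7; pos. Qed.
Lemma H7 a b c d : 0 < d -> d <= c -> c <= b -> b <= a ->
  (d / (d + b)) * ((a / (a + c)) * (d / (d + a)) + (c / (c + a)) * (d / (d + c))) <= (d / (d + c)) * ((a / (a + b)) * (d / (d + a)) + (b / (b + a)) * (d / (d + b))).
Proof.
move=> hd hdc hcb hba; rewrite -subr_ge0.
have [ha hb hc] : [/\ 0 < a, 0 < b & 0 < c] by split; lra.
have hD := DEN_gt0 ha hb hc hd.
have -> : (d / (d + c)) * ((a / (a + b)) * (d / (d + a)) + (b / (b + a)) * (d / (d + b))) - ((d / (d + b)) * ((a / (a + c)) * (d / (d + a)) + (c / (c + a)) * (d / (d + c)))) = N7 d (c - d) (b - c) (a - b) / DEN a b c d.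
  by rewrite /N7 /DEN; field; sidec.
apply: divr_ge0; last exact: ltW.
by apply: N7_ge0; rewrite ?subr_ge0 //; exact: ltW.
Qed.

Definition N8 (d s t u : R) := (2%:R * d^+2 * s^+2 * u^+2) + (4%:R * d^+2 * s^+2 * t^+1 * u^+1) + (4%:R * d^+2 * s^+3 * u^+1) + (4%:R * d^+3 * s^+1 * u^+2) + (8%:R * d^+3 * s^+1 * t^+1 * u^+1) + (12%:R * d^+3 * s^+2 * u^+1) + (2%:R * d^+4 * u^+2) + (4%:R * d^+4 * t^+1 * u^+1) + (12%:R * d^+4 * s^+1 * u^+1) + (4%:R * d^+5 * u^+1).
Lemma N8_ge0 d s t u : 0 <= d -> 0 <= s -> 0 <= t -> 0 <= u -> 0 <= N8 d s t u.
Proof. move=> *; rewrite /N8; pos. Qed.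
Lemma H8 a b c d : 0 < d -> d <= c -> c <= b -> b <= a ->
  (d / (d + a)) * ((b / (b + c)) * (d / (d + b)) + (c / (c + b)) * (d / (d + c))) <= (d / (d + b)) * ((a / (a + c)) * (d / (d + a)) + (c / (c + a)) * (d / (d + c))).
Proof.
move=> hd hdc hcb hba; rewrite -subr_ge0.
have [ha hb hc] : [/\ 0 < a, 0 < b & 0 < c] by split; lra.
have hD := DEN_gt0 ha hb hc hd.
have -> : (d / (d + b)) * ((a / (a + c)) * (d / (d + a)) + (c / (c + a)) * (d / (d + c))) - ((d / (d + a)) * ((b / (b + c)) * (d / (d + b)) + (c / (c + b)) * (d / (d + c)))) = N8 d (c - d) (b - c) (a - b) / DEN a b c d.
  by rewrite /N8 /DEN; field; sidec.
apply: divr_ge0; last exact: ltW.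
by apply: N8_ge0; rewrite ?subr_ge0 //; exact: ltW.
Qed.
End Aux.

Lemma e12 : (t1 == t2) = false. Proof. by rewrite /t1 /t2 -val_eqE /= !inordK. Qed.
Lemma e13 : (t1 == t3) = false. Proof. by rewrite /t1 /t3 -val_eqE /= !inordK. Qed.
Lemma e14 : (t1 == t4) = false. Proof. by rewrite /t1 /t4 -val_eqE /= !inordK. Qed.
Lemma e21 : (t2 == t1) = false. Proof. by rewrite /t2 /t1 -val_eqE /= !inordK. Qed.
Lemma e23 : (t2 == t3) = false. Proof. by rewrite /t2 /t3 -val_eqE /= !inordK. Qed.
Lemma e24 : (t2 == t4) = false. Proof. by rewrite /t2 /t4 -val_eqE /= !inordK. Qed.
Lemma e31 : (t3 == t1) = false. Proof. by rewrite /t3 /t1 -val_eqE /= !inordK. Qed.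
Lemma e32 : (t3 == t2) = false. Proof. by rewrite /t3 /t2 -val_eqE /= !inordK. Qed.
Lemma e34 : (t3 == t4) = false. Proof. by rewrite /t3 /t4 -val_eqE /= !inordK. Qed.
Lemma e41 : (t4 == t1) = false. Proof. by rewrite /t4 /t1 -val_eqE /= !inordK. Qed.
Lemma e42 : (t4 == t2) = false. Proof. by rewrite /t4 /t2 -val_eqE /= !inordK. Qed.
Lemma e43 : (t4 == t3) = false. Proof. by rewrite /t4 /t3 -val_eqE /= !inordK. Qed.

Theorem lemma1 (R : realFieldType) (v : 'I_4 -> R)
  (h12 : v t1 >= v t2) (h23 : v t2 >= v t3) (h34 : v t3 >= v t4)
  (h4 : 0 < v t4) :
  [/\ TA v t1 >= TB v t1 /\ TB v t1 >= TC v t1,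
      TB v t2 >= TA v t2 /\ TA v t2 >= TC v t2,
      TC v t3 >= TA v t3 /\ TA v t3 >= TB v t3 &
      TC v t4 >= TB v t4 /\ TB v t4 >= TA v t4].
Proof.
rewrite /TA /TB /TC /ko !eqxx ?e12 ?e13 ?e14 ?e21 ?e23 ?e24 ?e31 ?e32 ?e34 ?e41 ?e42 ?e43 /pwin.
split; split.
- exact: H1.
- exact: H2.
- exact: H3.
- exact: H4.
- exact: H5.
- exact: H6.
- exact: H7.
- exact: H8.
Qed.
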